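(* Let $\alpha>0$, $\nu:=\nu(\alpha)$, $T:=T(\alpha)$, and let $(a_n)_{n\ge1}$ be a positive sequence with $\lim_{n\to\infty}a_ne^{-\nu n}=0$. Let $(\chi_t)_{t\ge1}$ be defined by $\chi_t:=\max\{a_t,\frac{t-1}{\alpha}\chi_1,\dots,\frac1\alpha\chi_{t-1}\}$ and set $c_t:=\chi_te^{-\nu t}$. Then there exists $t_1$ such that $c_t=c_{t+T}$ for all $t\ge t_1$.
   Context: For $\alpha>0$, let $T=T(\alpha)\in\mathbb N$ be the unique positive integer with $\frac{(T-1)^T}{T^{T-1}}<\alpha\le\frac{T^{T+1}}{(T+1)^T}$, and define $\nu(\alpha):=\frac1T\log\frac T\alpha$. *)

(* Defs.v *)
From Stdlib Require Import Reals Lra Lia List.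
Open Scope R_scope.

Definition is_T (alpha : R) (T : nat) : Prop :=
  (1 <= T)%nat /\
  (INR T - 1) ^ T / INR T ^ (T - 1) < alpha /\
  alpha <= INR T ^ (T + 1) / (INR T + 1) ^ T.

Definition nu (alpha : R) (T : nat) : R := / INR T * ln (INR T / alpha).

Definition chi_rhs (alpha : R) (a chi : nat -> R) (t : nat) : R :=
  fold_right Rmax (a t)
    (map (fun s => INR (t - s) / alpha * chi s) (seq 1 (t - 1))).

(* Main.v *)
Require Import Defs.
From Stdlib Require Import Reals List.
From Stdlib Require Import Lra Lia Psatz Classical.
Open Scope R_scope.

Lemma pow_lt_strict (x y : R) (n : nat) : 0 <= x < y -> (1 <= n)%nat -> x ^ n < y ^ n.
Proof.
  intros [Hx Hxy] Hn. induction n as [|n IH]; [lia|].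
  destruct n as [|n]; [simpl; lra|].
  assert (H := IH ltac:(lia)).
  change ((x * x ^ S n) < y * y ^ S n).
  assert (0 <= x ^ S n) by (apply pow_le; lra).
  nra.
Qed.

Lemma exp_nat (x : R) (n : nat) : exp (INR n * x) = exp x ^ n.
Proof.
  induction n as [|n IH]. { simpl; rewrite Rmult_0_l; apply exp_0. }
  rewrite S_INR. simpl pow. rewrite Rmult_plus_distr_r, Rmult_1_l, exp_plus, IH. ring.
Qed.

Definition qq (alpha : R) (T : nat) := exp (nu alpha T).
Definition ww (alpha : R) (T : nat) (k : nat) := INR k / alpha * exp (- nu alpha T * INR k).

Lemma exp_neg_nu (alpha : R) (T k : nat) : exp (- nu alpha T * INR k) = / (qq alpha T ^ k).
Proof.
  unfold qq. rewrite <- exp_nat, <- exp_Ropp. f_equal. ring.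
Qed.

Lemma qq_pos alpha T : 0 < qq alpha T.
Proof. apply exp_pos. Qed.

Lemma qq_powT alpha T : 0 < alpha -> (1 <= T)%nat -> qq alpha T ^ T = INR T / alpha.
Proof.
  intros Ha HT. unfold qq. rewrite <- exp_nat. unfold nu.
  assert (0 < INR T) by (apply lt_0_INR; lia).
  rewrite <- Rmult_assoc, Rinv_r, Rmult_1_l by lra.
  apply exp_ln. apply Rdiv_lt_0_compat; lra.
Qed.

Lemma qq_bounds alpha T : 0 < alpha -> is_T alpha T ->
  INR T + 1 <= INR T * qq alpha T /\ (INR T - 1) * qq alpha T < INR T.
Proof.
  intros Ha [HT [H1 H2]].
  assert (HTp : 0 < INR T) by (apply lt_0_INR; lia).
  assert (HqT := qq_powT alpha T Ha HT).
  set (q := qq alpha T) in *.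
  assert (Hq : 0 < q) by apply qq_pos.
  assert (HT1 : 1 <= INR T) by (replace 1 with (INR 1) by reflexivity; apply le_INR; lia).
  assert (HTT : INR T ^ T = INR T * INR T ^ (T - 1)).
  { destruct T; [lia|]. simpl. replace (T - 0)%nat with T by lia. reflexivity. }
  assert (Hp : 0 < INR T ^ (T-1)) by (apply pow_lt; lra).
  split.
  - destruct (Rle_lt_dec (INR T + 1) (INR T * q)) as [h|h]; [exact h|exfalso].
    assert (Hl := pow_lt_strict (INR T * q) (INR T + 1) T ltac:(split; nra) HT).
    rewrite Rpow_mult_distr, HqT in Hl.
    assert (Hpp : 0 < (INR T + 1) ^ T) by (apply pow_lt; lra).
    replace (T + 1)%nat with (S T) in H2 by lia. simpl in H2.
    apply (Rmult_le_compat_r ((INR T + 1) ^ T)) in H2; [|lra].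
    unfold Rdiv in H2. rewrite Rmult_assoc, Rinv_l in H2 by lra.
    assert (INR T ^ T * (INR T * / alpha) * alpha = INR T ^ T * INR T) by (field; lra).
    nra.
  - destruct (Rle_lt_dec (INR T) ((INR T - 1) * q)) as [h|h]; [exfalso|exact h].
    assert (Hl := pow_incr (INR T) ((INR T - 1) * q) T ltac:(split; lra)).
    rewrite Rpow_mult_distr, HqT in Hl.
    unfold Rdiv in H1.
    apply (Rmult_lt_compat_r (INR T ^ (T - 1))) in H1; [|lra].
    rewrite Rmult_assoc, Rinv_l in H1 by lra.
    assert ((INR T - 1) ^ T * (INR T * / alpha) * alpha = (INR T - 1) ^ T * INR T) by (field; lra).
    nra.
Qed.


Lemma ww_eq alpha T k : ww alpha T k = INR k * / alpha * / (qq alpha T ^ k).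
Proof. unfold ww. rewrite exp_neg_nu. reflexivity. Qed.

Lemma ww_T alpha T : 0 < alpha -> (1 <= T)%nat -> ww alpha T T = 1.
Proof.
  intros Ha HT. rewrite ww_eq, qq_powT by assumption.
  assert (0 < INR T) by (apply lt_0_INR; lia). field; lra.
Qed.

Lemma ww_nonneg alpha T k : 0 < alpha -> 0 <= ww alpha T k.
Proof.
  intros Ha. rewrite ww_eq. assert (0 < qq alpha T ^ k) by (apply pow_lt, qq_pos).
  assert (0 <= INR k) by apply pos_INR.
  assert (0 < / alpha) by (apply Rinv_0_lt_compat; lra).
  assert (0 < / qq alpha T ^ k) by (apply Rinv_0_lt_compat; lra).
  apply Rmult_le_pos; [apply Rmult_le_pos|]; lra.
Qed.

Lemma ww_step alpha T m : 0 < alpha ->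
  ww alpha T (S m) * qq alpha T = ww alpha T m + / alpha * / (qq alpha T ^ m).
Proof.
  intros Ha. rewrite !ww_eq. rewrite S_INR. simpl pow.
  assert (0 < qq alpha T ^ m) by (apply pow_lt, qq_pos).
  assert (0 < qq alpha T) by apply qq_pos.
  field; lra.
Qed.

Lemma ww_dec alpha T m : 0 < alpha -> is_T alpha T -> (T <= m)%nat ->
  ww alpha T (S m) <= ww alpha T m.
Proof.
  intros Ha HT Hm. destruct (qq_bounds alpha T Ha HT) as [B1 _].
  assert (Hs := ww_step alpha T m Ha). assert (Hw := ww_eq alpha T m).
  set (q := qq alpha T) in *.
  assert (0 < q) by apply qq_pos.
  assert (0 < q ^ m) by (apply pow_lt; lra).
  assert (Z : 0 < / alpha * / q ^ m) by (apply Rmult_lt_0_compat; apply Rinv_0_lt_compat; lra).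
  assert (HTm : INR T <= INR m) by (apply le_INR; lia).
  assert (HT1 : 1 <= INR T) by (replace 1 with (INR 1) by reflexivity; apply le_INR; destruct HT; lia).
  set (z := / alpha * / q ^ m) in *.
  replace (INR m * / alpha * / q ^ m) with (INR m * z) in * by (unfold z; ring).
  set (W := ww alpha T (S m)) in *. set (W0 := ww alpha T m) in *. clearbody W W0 z.
  assert (INR m + 1 <= INR m * q) by nra.
  nra.
Qed.

Lemma ww_inc alpha T m : 0 < alpha -> is_T alpha T -> (S m <= T)%nat ->
  ww alpha T m <= ww alpha T (S m).
Proof.
  intros Ha HT Hm. destruct (qq_bounds alpha T Ha HT) as [B1 B2].
  assert (Hs := ww_step alpha T m Ha). assert (Hw := ww_eq alpha T m).
  set (q := qq alpha T) in *.
  assert (0 < q) by apply qq_pos.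
  assert (0 < q ^ m) by (apply pow_lt; lra).
  assert (Z : 0 < / alpha * / q ^ m) by (apply Rmult_lt_0_compat; apply Rinv_0_lt_compat; lra).
  assert (HTm : INR m + 1 <= INR T) by (rewrite <- S_INR; apply le_INR; lia).
  assert (H0m : 0 <= INR m) by apply pos_INR.
  set (z := / alpha * / q ^ m) in *.
  replace (INR m * / alpha * / q ^ m) with (INR m * z) in * by (unfold z; ring).
  set (W := ww alpha T (S m)) in *. set (W0 := ww alpha T m) in *. clearbody W W0 z.
  assert (Hq1 : 1 < q) by nra.
  assert (INR m * q <= INR m + 1) by nra.
  nra.
Qed.

Lemma ww_dec_d alpha T m d : 0 < alpha -> is_T alpha T -> (T <= m)%nat ->
  ww alpha T (m + d) <= ww alpha T m.
Proof.
  intros Ha HT Hm. induction d as [|d IH]. { rewrite Nat.add_0_r; lra. }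
  replace (m + S d)%nat with (S (m + d)) by lia.
  eapply Rle_trans; [apply ww_dec; auto; lia| exact IH].
Qed.

Lemma ww_inc_d alpha T m d : 0 < alpha -> is_T alpha T -> (m + d <= T)%nat ->
  ww alpha T m <= ww alpha T (m + d).
Proof.
  intros Ha HT Hm. induction d as [|d IH]. { rewrite Nat.add_0_r; lra. }
  replace (m + S d)%nat with (S (m + d)) by lia.
  eapply Rle_trans; [apply IH; lia| apply ww_inc; auto; lia].
Qed.

Lemma ww_le1 alpha T k : 0 < alpha -> is_T alpha T -> ww alpha T k <= 1.
Proof.
  intros Ha HT. assert (HT1 : (1 <= T)%nat) by (destruct HT; lia).
  rewrite <- (ww_T alpha T Ha HT1).
  destruct (Compare_dec.le_lt_dec T k).
  - replace k with (T + (k - T))%nat by lia. apply ww_dec_d; auto.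
  - assert (H := ww_inc_d alpha T k (T - k) Ha HT ltac:(lia)).
    replace (k + (T - k))%nat with T in H by lia. exact H.
Qed.

Lemma fmax_ge_d (l : list R) (d : R) : d <= fold_right Rmax d l.
Proof. induction l; simpl; [lra|]. eapply Rle_trans; [exact IHl|apply Rmax_r]. Qed.

Lemma fmax_ge_in (l : list R) (d x : R) : In x l -> x <= fold_right Rmax d l.
Proof.
  induction l; simpl; [tauto|]. intros [<-|H]; [apply Rmax_l|].
  eapply Rle_trans; [exact (IHl H)|apply Rmax_r].
Qed.

Lemma fmax_att (l : list R) (d : R) : fold_right Rmax d l = d \/ In (fold_right Rmax d l) l.
Proof.
  induction l; simpl; [auto|]. destruct (Rle_dec a (fold_right Rmax d l)).
  - rewrite Rmax_right by exact r. destruct IHl as [H|H]; [left; exact H| right; right; exact H].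
  - rewrite Rmax_left by lra. right; left; reflexivity.
Qed.

Definition cc (alpha : R) (T : nat) (chi : nat -> R) (t : nat) := chi t * exp (- nu alpha T * INR t).

Lemma cc_ident alpha T chi s t : (s <= t)%nat ->
  INR (t - s) / alpha * chi s * exp (- nu alpha T * INR t) = ww alpha T (t - s) * cc alpha T chi s.
Proof.
  intros H. unfold ww, cc.
  replace (INR t) with (INR (t - s) + INR s) at 1 by (rewrite <- plus_INR; f_equal; lia).
  rewrite Rmult_plus_distr_l, exp_plus. ring.
Qed.

Lemma D1 alpha T a chi s t :
  (forall t : nat, (1 <= t)%nat -> chi t = chi_rhs alpha a chi t) ->
  (1 <= s)%nat -> (s < t)%nat ->
  ww alpha T (t - s) * cc alpha T chi s <= cc alpha T chi t.
Proof.
  intros Hchi Hs Ht. rewrite <- cc_ident by lia. unfold cc.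
  apply Rmult_le_compat_r; [apply Rlt_le, exp_pos|].
  rewrite (Hchi t) by lia. unfold chi_rhs. apply fmax_ge_in.
  apply in_map_iff. exists s. split; [reflexivity|]. apply in_seq. lia.
Qed.

Lemma D3 alpha T a chi t :
  (forall t : nat, (1 <= t)%nat -> chi t = chi_rhs alpha a chi t) ->
  (1 <= t)%nat ->
  cc alpha T chi t = a t * exp (- nu alpha T * INR t) \/
  exists s, (1 <= s)%nat /\ (s < t)%nat /\ cc alpha T chi t = ww alpha T (t - s) * cc alpha T chi s.
Proof.
  intros Hchi Ht. replace (cc alpha T chi t) with (chi_rhs alpha a chi t * exp (- nu alpha T * INR t))
    by (unfold cc; rewrite <- Hchi; auto). unfold chi_rhs.
  destruct (fmax_att (map (fun s => INR (t - s) / alpha * chi s) (seq 1 (t - 1))) (a t)) as [H|H].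
  - left. rewrite H. reflexivity.
  - right. apply in_map_iff in H. destruct H as [s [Hs Hin]]. apply in_seq in Hin.
    exists s. split; [lia|split; [lia|]]. rewrite <- Hs. apply cc_ident. lia.
Qed.

Lemma Dpos alpha T a chi t :
  (forall n : nat, (1 <= n)%nat -> 0 < a n) ->
  (forall t : nat, (1 <= t)%nat -> chi t = chi_rhs alpha a chi t) ->
  (1 <= t)%nat -> 0 < cc alpha T chi t.
Proof.
  intros Ha Hchi Ht. unfold cc. apply Rmult_lt_0_compat; [|apply exp_pos].
  rewrite (Hchi t Ht). unfold chi_rhs. eapply Rlt_le_trans; [apply (Ha t Ht)|apply fmax_ge_d].
Qed.

Lemma Dshift alpha T a chi t : 0 < alpha -> (1 <= T)%nat ->
  (forall t : nat, (1 <= t)%nat -> chi t = chi_rhs alpha a chi t) ->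
  (1 <= t)%nat -> cc alpha T chi t <= cc alpha T chi (t + T).
Proof.
  intros Ha HT Hchi Ht. assert (H := D1 alpha T a chi t (t + T) Hchi Ht ltac:(lia)).
  replace (t + T - t)%nat with T in H by lia. rewrite ww_T in H by assumption. lra.
Qed.

Fixpoint cnt (v : R) (l : list R) : nat :=
  match l with nil => 0%nat | x :: l' => ((if Rlt_dec v x then 1 else 0) + cnt v l')%nat end.

Lemma cnt_mono v v' l : v <= v' -> (cnt v' l <= cnt v l)%nat.
Proof.
  intros H. induction l as [|x l IH]; simpl; [lia|].
  destruct (Rlt_dec v' x); destruct (Rlt_dec v x); try lia. exfalso; lra.
Qed.

Lemma cnt_strict v v' l : v < v' -> In v' l -> (cnt v' l < cnt v l)%nat.
Proof.
  intros H. induction l as [|x l IH]; simpl; [tauto|]. intros [Hx|Hin].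
  - subst x. destruct (Rlt_dec v' v'); [lra|]. destruct (Rlt_dec v v'); [|lra].
    assert (cnt v' l <= cnt v l)%nat by (apply cnt_mono; lra). lia.
  - specialize (IH Hin).
    destruct (Rlt_dec v' x); destruct (Rlt_dec v x); try lia. exfalso; lra.
Qed.

Fixpoint FF (f : nat -> R) (l : list R) (t n : nat) : nat :=
  match n with 0 => 0%nat | S n' => (cnt (f t) l + FF f l (S t) n')%nat end.

Lemma FF_last f l t n : (FF f l t (S n) = FF f l t n + cnt (f (t + n)%nat) l)%nat.
Proof.
  revert t. induction n as [|n IH]; intros t.
  - simpl. replace (t + 0)%nat with t by lia. lia.
  - change (FF f l t (S (S n))) with (cnt (f t) l + FF f l (S t) (S n))%nat.
    rewrite IH. change (FF f l t (S n)) with (cnt (f t) l + FF f l (S t) n)%nat.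
    replace (S t + n)%nat with (t + S n)%nat by lia. lia.
Qed.

Lemma FF_step f l T t : (FF f l (S t) T + cnt (f t) l = FF f l t T + cnt (f (t + T)%nat) l)%nat.
Proof.
  rewrite <- FF_last. simpl. lia.
Qed.

Lemma eventually_periodic (f : nat -> R) (l : list R) (T N : nat) :
  (forall t, (N <= t)%nat -> In (f t) l) ->
  (forall t, (N <= t)%nat -> f t <= f (t + T)%nat) ->
  exists t1, (N <= t1)%nat /\ forall t, (t1 <= t)%nat -> f t = f (t + T)%nat.
Proof.
  intros Hin Hle.
  assert (Hdec : forall t, (N <= t)%nat -> (FF f l (S t) T <= FF f l t T)%nat).
  { intros t Ht. assert (H1 := FF_step f l T t).
    assert (cnt (f (t+T)%nat) l <= cnt (f t) l)%nat by (apply cnt_mono, Hle, Ht). lia. }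
  assert (Hdec2 : forall t d, (N <= t)%nat -> (FF f l (t + d) T <= FF f l t T)%nat).
  { intros t d Ht. induction d as [|d IH]; [rewrite Nat.add_0_r; lia|].
    replace (t + S d)%nat with (S (t + d)) by lia. specialize (Hdec (t + d)%nat ltac:(lia)). lia. }
  assert (Main : forall n t0, (N <= t0)%nat -> (FF f l t0 T <= n)%nat ->
     exists t1, (t0 <= t1)%nat /\ forall t, (t1 <= t)%nat -> f t = f (t + T)%nat).
  { induction n as [|n IH]; intros t0 Ht0 HF.
    - exists t0. split; [lia|]. intros t Ht.
      destruct (Rle_lt_dec (f (t+T)%nat) (f t)) as [h|h].
      + specialize (Hle t ltac:(lia)). lra.
      + exfalso. assert (H1 := FF_step f l T t).
        assert (cnt (f (t+T)%nat) l < cnt (f t) l)%nat by (apply cnt_strict; [exact h| apply Hin; lia]).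
        specialize (Hdec2 t0 (t - t0)%nat Ht0). replace (t0 + (t - t0))%nat with t in Hdec2 by lia. lia.
    - destruct (Classical_Prop.classic (forall t, (t0 <= t)%nat -> f t = f (t + T)%nat)) as [Hall|Hn].
      + exists t0. split; [lia|exact Hall].
      + apply Classical_Pred_Type.not_all_ex_not in Hn. destruct Hn as [t Ht].
        apply Classical_Prop.imply_to_and in Ht. destruct Ht as [Ht Hne].
        assert (h : f t < f (t + T)%nat) by (specialize (Hle t ltac:(lia)); lra).
        assert (H1 := FF_step f l T t).
        assert (cnt (f (t+T)%nat) l < cnt (f t) l)%nat by (apply cnt_strict; [exact h| apply Hin; lia]).
        specialize (Hdec2 t0 (t - t0)%nat Ht0). replace (t0 + (t - t0))%nat with t in Hdec2 by lia.
        destruct (IH (S t) ltac:(lia) ltac:(lia)) as [t1 [Ht1 Hfin]]. exists t1. split; [lia|exact Hfin]. }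
  destruct (Main (FF f l N T) N ltac:(lia) ltac:(lia)) as [t1 [H1 H2]]. exists t1. auto.
Qed.

Lemma fmin_le_in (l : list R) (d x : R) : In x l -> fold_right Rmin d l <= x.
Proof.
  induction l; simpl; [tauto|]. intros [Hx|H]; [subst; apply Rmin_l|].
  eapply Rle_trans; [apply Rmin_r|exact (IHl H)].
Qed.

Lemma fmin_pos (l : list R) (d : R) : 0 < d -> (forall x, In x l -> 0 < x) -> 0 < fold_right Rmin d l.
Proof.
  intros Hd. induction l; simpl; intros H; [exact Hd|].
  apply Rmin_glb_lt; [apply H; auto| apply IHl; intros; apply H; auto].
Qed.

Lemma delta_list (l : list R) : (forall x, In x l -> x <= 1) ->
  exists d, 0 <= d < 1 /\ forall x, In x l -> x = 1 \/ x <= d.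
Proof.
  induction l as [|y l IH]; intros H.
  - exists 0. split; [lra|]. intros x [].
  - destruct IH as [d [Hd Hx]]. { intros; apply H; simpl; auto. }
    assert (Hy : y <= 1) by (apply H; simpl; auto).
    destruct (Req_dec y 1) as [E|E].
    + exists d. split; [exact Hd|]. intros x [<-|Hin]; auto.
    + exists (Rmax d y). split.
      * split; [eapply Rle_trans; [apply Hd|apply Rmax_l]|]. apply Rmax_lub_lt; lra.
      * intros x [<-|Hin]; [right; apply Rmax_r|].
        destruct (Hx x Hin) as [h|h]; [left; exact h|right; eapply Rle_trans; [exact h|apply Rmax_l]].
Qed.

Fixpoint Lst (w c : nat -> R) (T : nat) (L0 : list R) (j : nat) : list R :=
  match j with
  | 0 => L0
  | S j' => Lst w c T L0 j' ++ flat_map (fun x => map (fun k => w k * x) (seq 1 (2 * T))) (Lst w c T L0 j')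
  end.

Lemma Lst_mono w c T L0 j d x : In x (Lst w c T L0 j) -> In x (Lst w c T L0 (j + d)).
Proof.
  induction d as [|d IH]; intros H; [rewrite Nat.add_0_r; exact H|].
  replace (j + S d)%nat with (S (j + d)) by lia. simpl. apply in_or_app. left. auto.
Qed.

Lemma main_generic (c w b : nat -> R) (T : nat) :
  (1 <= T)%nat -> w T = 1 ->
  (forall k, 0 <= w k) -> (forall k, w k <= 1) ->
  (forall k, (2*T <= k)%nat -> w k <= w (k - T)%nat) ->
  (forall t, (1<=t)%nat -> 0 < c t) ->
  (forall s t, (1<=s)%nat -> (s<t)%nat -> w (t-s)%nat * c s <= c t) ->
  (forall t, (1<=t)%nat -> c t = b t \/ exists s, (1<=s)%nat /\ (s<t)%nat /\ c t = w (t-s)%nat * c s) ->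
  (forall m, 0 < m -> exists N, forall n, (N <= n)%nat -> b n < m) ->
  exists t1, (1<=t1)%nat /\ forall t, (t1<=t)%nat -> c t = c (t+T)%nat.
Proof.
  intros HT HwT Hw0 Hw1 Hwd Hc HD1 HD3 Hb.
  assert (Hsh : forall t, (1 <= t)%nat -> c t <= c (t + T)%nat).
  { intros t Ht. assert (H := HD1 t (t+T)%nat Ht ltac:(lia)).
    replace (t + T - t)%nat with T in H by lia. rewrite HwT in H. lra. }
  assert (HshB : forall t, (T < t)%nat -> c (t - T)%nat <= c t).
  { intros t Ht. assert (H := Hsh (t - T)%nat ltac:(lia)). replace (t - T + T)%nat with t in H by lia. exact H. }
  set (m0 := fold_right Rmin 1 (map c (seq 1 T))).
  assert (Hm0 : 0 < m0).
  { apply fmin_pos; [lra|]. intros x Hx. apply in_map_iff in Hx. destruct Hx as [s [<- Hs]].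
    apply in_seq in Hs. apply Hc. lia. }
  assert (Hm0c : forall t, (1 <= t)%nat -> m0 <= c t).
  { assert (forall n t, (t <= n)%nat -> (1 <= t)%nat -> m0 <= c t).
    { induction n as [|n IH]; intros t Htn Ht; [lia|].
      destruct (Compare_dec.le_lt_dec t T) as [h|h].
      - apply fmin_le_in. apply in_map_iff. exists t. split; [reflexivity|]. apply in_seq. lia.
      - eapply Rle_trans; [apply (IH (t - T)%nat); lia| apply HshB; exact h]. }
    intros t Ht. apply (H t t); lia. }
  destruct (Hb m0 Hm0) as [N1 HN1].
  set (Nb := (N1 + 1)%nat). set (N0 := (Nb + 2 * T)%nat).
  assert (Hstep : forall t, (N0 <= t)%nat ->
     c t = c (t - T)%nat \/ exists k, (1 <= k)%nat /\ (k < 2 * T)%nat /\ c t = w k * c (t - k)%nat).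
  { intros t Ht. destruct (HD3 t ltac:(lia)) as [Hbt|[s [Hs1 [Hs2 Hcs]]]].
    - exfalso. assert (b t < m0) by (apply HN1; lia).
      assert (m0 <= c (t - T)%nat) by (apply Hm0c; lia).
      assert (c (t - T)%nat <= c t) by (apply HshB; lia). lra.
    - destruct (Compare_dec.le_lt_dec (2 * T) (t - s)) as [h|h].
      + left. assert (H1 := Hwd (t - s)%nat h).
        assert (H2 := HD1 s (t - T)%nat Hs1 ltac:(lia)).
        replace (t - T - s)%nat with (t - s - T)%nat in H2 by lia.
        assert (0 < c s) by (apply Hc; lia).
        assert (H3 : c (t - T)%nat <= c t) by (apply HshB; lia).
        assert (w (t - s)%nat * c s <= w (t - s - T)%nat * c s) by (apply Rmult_le_compat_r; lra).
        lra.
      + right. exists (t - s)%nat. split; [lia|split; [lia|]].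
        replace (t - (t - s))%nat with s by lia. exact Hcs. }
  destruct (delta_list (map w (seq 1 (2 * T)))) as [dl [Hdl Hdx]].
  { intros x Hx. apply in_map_iff in Hx. destruct Hx as [k [<- _]]. apply Hw1. }
  set (L0 := map c (seq Nb (N0 - Nb))).
  set (B := fold_right Rmax 0 L0).
  assert (HB : 0 < B).
  { eapply Rlt_le_trans; [apply (Hc Nb); unfold Nb; lia|]. apply fmax_ge_in.
    apply in_map_iff. exists Nb. split; [reflexivity|]. apply in_seq. unfold N0; lia. }
  assert (Inv : forall n t, (t <= n)%nat -> (Nb <= t)%nat ->
     exists j, In (c t) (Lst w c T L0 j) /\ c t <= B * dl ^ j).
  { induction n as [|n IH]; intros t Htn Ht.
    - exfalso; unfold Nb in Ht; lia.
    - destruct (Compare_dec.le_lt_dec N0 t) as [h|h].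
      + destruct (Hstep t h) as [E|[k [Hk1 [Hk2 E]]]].
        * destruct (IH (t - T)%nat ltac:(lia) ltac:(unfold N0 in h; lia)) as [j [Hj1 Hj2]].
          exists j. rewrite E. auto.
        * destruct (IH (t - k)%nat ltac:(lia) ltac:(unfold N0 in h; lia)) as [j [Hj1 Hj2]].
          assert (Hpos : 0 < c (t - k)%nat) by (apply Hc; unfold N0, Nb in h; lia).
          destruct (Hdx (w k)) as [W|W].
          { apply in_map_iff. exists k. split; [reflexivity|]. apply in_seq. lia. }
          -- exists j. rewrite E, W, Rmult_1_l. auto.
          -- exists (S j). rewrite E. split.
             ++ simpl. apply in_or_app. right. apply in_flat_map. exists (c (t - k)%nat).
                split; [exact Hj1|]. apply in_map_iff. exists k. split; [reflexivity|]. apply in_seq. lia.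
             ++ simpl. assert (w k * c (t - k)%nat <= dl * c (t - k)%nat) by (apply Rmult_le_compat_r; lra).
                assert (dl * c (t - k)%nat <= dl * (B * dl ^ j)) by (apply Rmult_le_compat_l; lra).
                lra.
      + exists 0%nat. simpl. split.
        * apply in_map_iff. exists t. split; [reflexivity|]. apply in_seq. unfold N0 in *; lia.
        * rewrite Rmult_1_r. apply fmax_ge_in. apply in_map_iff. exists t. split; [reflexivity|].
          apply in_seq. unfold N0 in *; lia. }
  destruct (pow_lt_1_zero dl ltac:(rewrite Rabs_right; lra) (m0 / B) ltac:(apply Rdiv_lt_0_compat; lra))
    as [J HJ].
  assert (Hin : forall t, (Nb <= t)%nat -> In (c t) (Lst w c T L0 J)).
  { intros t Ht. destruct (Inv t t (le_n t) Ht) as [j [Hj1 Hj2]].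
    destruct (Compare_dec.le_lt_dec J j) as [h|h].
    - exfalso. specialize (HJ j h). rewrite Rabs_right in HJ by (apply Rle_ge, pow_le; lra).
      assert (m0 <= c t) by (apply Hm0c; unfold Nb in Ht; lia).
      assert (B * dl ^ j < m0) by (apply (Rmult_lt_compat_l B) in HJ; [|lra];
        unfold Rdiv in HJ; rewrite <- Rmult_assoc, (Rmult_comm B m0), Rmult_assoc, Rinv_r, Rmult_1_r in HJ by lra; exact HJ).
      lra.
    - replace J with (j + (J - j))%nat by lia. apply Lst_mono. exact Hj1. }
  destruct (eventually_periodic c (Lst w c T L0 J) T Nb Hin) as [t1 [Ht1 Hp]].
  { intros t Ht. apply Hsh. unfold Nb in Ht; lia. }
  exists t1. split; [unfold Nb in Ht1; lia|exact Hp].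
Qed.

Theorem proposition1 (alpha : R) (T : nat) (a chi : nat -> R) :
  0 < alpha ->
  is_T alpha T ->
  (forall n : nat, (1 <= n)%nat -> 0 < a n) ->
  Un_cv (fun n => a n * exp (- nu alpha T * INR n)) 0 ->
  (forall t : nat, (1 <= t)%nat -> chi t = chi_rhs alpha a chi t) ->
  exists t1 : nat, (1 <= t1)%nat /\
    forall t : nat, (t1 <= t)%nat ->
      chi t * exp (- nu alpha T * INR t) =
      chi (t + T)%nat * exp (- nu alpha T * INR (t + T)).
Proof.
  intros Ha HT Hapos Hcv Hchi.
  assert (HT1 : (1 <= T)%nat) by (destruct HT; lia).
  apply (main_generic (cc alpha T chi) (ww alpha T) (fun n => a n * exp (- nu alpha T * INR n)) T HT1).
  - apply ww_T; auto.
  - intros k; apply ww_nonneg; auto.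
  - intros k; apply ww_le1; auto.
  - intros k Hk. replace k with ((k - T) + T)%nat at 1 by lia. apply ww_dec_d; auto; lia.
  - intros t Ht. eapply Dpos; eauto.
  - intros s t Hs Hst. eapply D1; eauto.
  - intros t Ht. eapply D3; eauto.
  - intros m Hm. destruct (Hcv m Hm) as [N HN]. exists N. intros n Hn.
    specialize (HN n Hn). unfold R_dist in HN. rewrite Rminus_0_r in HN.
    apply Rabs_def2 in HN. lra.
Qed.
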